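(* Let $\mu$ be a Borel probability measure on $\mathbb{R}^m$ and let $\nu=\sum_{i=1}^k a_i\delta_{x_i}$ with $k\in\mathbb{N}$, $x_i\in\mathbb{R}^m$, $a_i>0$, $\sum_{i=1}^k a_i=1$. Then $D_0(\mu*\nu)=D_0(\mu)$.
   Context: $\delta_x$ is the Dirac measure at $x$. The convolution $\mu*\nu$ is the push-forward of $\mu\times\nu$ under $(x,y)\mapsto x+y$. For a finite Borel measure $\lambda$, $e_n(\lambda)=\exp\inf\{\int\log d(x,A)\,d\lambda(x):A\subset\mathbb{R}^m,\ \mathrm{Card}(A)\le n\}$ and the quantization dimension of order zero is $D_0(\lambda)=\lim_{n\to\infty}\frac{\log n}{-\log e_n(\lambda)}$; throughout it is assumed that these quantization dimensions exist whenever they occur. *)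

(* Defs.v *)
From HB Require Import structures.
From mathcomp Require Import all_boot all_order all_algebra.
From mathcomp Require Import all_classical all_reals all_analysis.
Set Implicit Arguments. Unset Strict Implicit. Unset Printing Implicit Defensive.
Import Order.TTheory GRing.Theory Num.Theory.
Local Open Scope ring_scope.
Local Open Scope classical_set_scope.

(* R^m is represented by m.-tuple R, which mathcomp-analysis equips with the
   product sigma-algebra of the Borel sigma-algebras on R (= Borel sets of R^m). *)

Section QuantDefs.
Context (R : realType) (m : nat).

Definition vadd (x y : m.-tuple R) : m.-tuple R :=
  [tuple tnth x i + tnth y i | i < m].

Definition edist (x y : m.-tuple R) : R :=
  Num.sqrt (\sum_(i < m) (tnth x i - tnth y i) ^+ 2).

(* d(x, A) for a finite set A given by an enumeration; d(x, empty) = +oo *)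
Definition dist_set (x : m.-tuple R) (A : seq (m.-tuple R)) : \bar R :=
  \big[Order.min/+oo%E]_(a <- A) (edist x a)%:E.

Definition elog (z : \bar R) : \bar R :=
  match z with
  | r%:E => if r == 0 then -oo%E else (ln r)%:E
  | +oo%E => +oo%E
  | -oo%E => -oo%E
  end.

Definition log_en (lam : set (m.-tuple R) -> \bar R) (n : nat) : \bar R :=
  ereal_inf [set (\int[lam]_x elog (dist_set x A))%E
            | A in [set A : seq (m.-tuple R) | (size A <= n)%N]].

Definition ratio (a : R) (b : \bar R) : \bar R :=
  match b with
  | r%:E => if r == 0 then +oo%E else (a / r)%:E
  | _ => 0%E
  end.

(* the sequence n |-> log n / (- log e_n(lam)), whose limit is D_0(lam) *)
Definition D0_seq (lam : set (m.-tuple R) -> \bar R) (n : nat) : \bar R :=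
  ratio (ln n%:R) (- log_en lam n)%E.

Definition convolution (mu nu : set (m.-tuple R) -> \bar R) : set (m.-tuple R) -> \bar R :=
  pushforward (mu \x nu)%E (fun p : m.-tuple R * m.-tuple R => vadd p.1 p.2).

Definition discrete_measure (k : nat) (a : 'I_k -> R) (x : 'I_k -> m.-tuple R)
  : set (m.-tuple R) -> \bar R :=
  fun B => (\sum_(i < k) (a i)%:E * \d_(x i) B)%E.

End QuantDefs.

(* Main.v *)
Require Import Defs.
From HB Require Import structures.
From mathcomp Require Import all_boot all_order all_algebra.
From mathcomp Require Import all_classical all_reals all_analysis.
From mathcomp Require Import measurable_realfun.
Set Implicit Arguments. Unset Strict Implicit. Unset Printing Implicit Defensive.
Import Order.TTheory GRing.Theory Num.Theory.
Import numFieldNormedType.Exports.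
Local Open Scope classical_set_scope.
Local Open Scope ring_scope.
Section S.
Context (R : realType) (m : nat).
Local Notation T := (m.-tuple R).


Definition tau (x0 : T) (y : T) : T := vadd y x0.

Lemma tnth_vadd (y z : T) j : tnth (vadd y z) j = (tnth y j + tnth z j)%R.
Proof. by rewrite /vadd tnth_mktuple. Qed.

Lemma tau_meas x0 : measurable_fun [set: T] (tau x0).
Proof.
apply/measurable_fun_tnthP => j.
rewrite (_ : _ \o _ = (fun y : T => tnth y j) \+ cst (tnth x0 j)); last first.
  by apply/funext => y /=; rewrite /tau tnth_vadd.
apply: measurable_funD => //; exact: measurable_tnth.
Qed.

Lemma edist_meas (a : T) : measurable_fun [set: T] (fun y => Defs.edist y a).
Proof.
rewrite /Defs.edist.
apply: measurableT_comp.
  apply: continuous_measurable_fun; exact: sqrt_continuous.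
apply: measurable_sum => j.
apply: measurable_funX; apply: measurable_funB => //; exact: measurable_tnth.
Qed.

Lemma elogE (r : R) : elog r%:E = if r == 0%R then -oo%E else (ln r)%:E.
Proof. by []. Qed.

Lemma elog_le (u v : \bar R) : (0 <= u -> u <= v -> elog u <= elog v)%E.
Proof.
case: v => [v| |]; last 2 first.
- by move=> _ _; rewrite leey.
- by case: u => // [u|] /=; rewrite ?lee_fin ?leeNy_eq//.
move: u => [u| |] //= u0 uv.
rewrite lee_fin in u0; rewrite lee_fin in uv.
have [u00|u0'] := eqVneq u (0:R)%R; first by rewrite leNye.
have v0 : (v != (0:R))%R.
  by apply: contra_neq u0' => v0; apply/eqP; rewrite eq_le u0 andbT (le_trans uv) // v0.
have up : ((0:R) < u)%R by rewrite lt0r u0' u0.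
by rewrite (negbTE v0) lee_fin ler_ln// posrE (lt_le_trans up uv).
Qed.


Definition fA (A : seq T) (y : T) : \bar R := elog (dist_set y A).

Lemma dist_set_cons (y a : T) A :
  dist_set y (a :: A) = Order.min (Defs.edist y a)%:E (dist_set y A).
Proof. by rewrite /dist_set big_cons. Qed.

Lemma dist_set_ge0 (y : T) A : (0 <= dist_set y A)%E.
Proof.
elim: A => [|a A ih]; first by rewrite /dist_set big_nil leey.
rewrite dist_set_cons le_min ih andbT lee_fin /Defs.edist sqrtr_ge0 //.
Qed.

Lemma elog_min (u v : \bar R) : (0 <= u)%E -> (0 <= v)%E ->
  elog (Order.min u v) = Order.min (elog u) (elog v).
Proof.
move=> u0 v0; have [uv|vu] := leP u v.
  by rewrite !min_l// elog_le.
by rewrite !min_r// elog_le// ltW.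
Qed.

Lemma fA_cons (a : T) A (y : T) : fA (a :: A) y = Order.min (elog (Defs.edist y a)%:E) (fA A y).
Proof.
rewrite /fA dist_set_cons elog_min// ?dist_set_ge0// lee_fin /Defs.edist sqrtr_ge0//.
Qed.

Lemma fA_meas (A : seq T) : measurable_fun [set: T] (fA A).
Proof.
elim: A => [|a A ih].
  rewrite (_ : fA [::] = cst +oo%E); first exact: measurable_cst.
  by apply/funext => y; rewrite /fA /dist_set big_nil.
rewrite (_ : fA (a :: A) = fun y => Order.min (elog (Defs.edist y a)%:E) (fA A y)); last first.
  by apply/funext => y; rewrite fA_cons.
apply: measurable_mine => //.
rewrite (_ : (fun y => _) = fun y => if Defs.edist y a == 0%R then -oo%E else (ln (Defs.edist y a))%:E); last first.
  by apply/funext => y.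
apply: measurable_fun_ifT.
- apply: measurable_fun_eqr; [exact: edist_meas|exact: measurable_cst].
- exact: measurable_cst.
- apply/measurable_EFinP; apply: measurableT_comp; first exact: measurable_ln.
  exact: edist_meas.
Qed.

End S.
Section eqmi.
Local Open Scope ereal_scope.
Context d (T : measurableType d) (R : realType) (D : set T).
Import HBNNSimple.

Let eq_measure_integral0 (m2 m1 : set T -> \bar R) (f : T -> \bar R) :
  (forall A, measurable A -> A `<=` D -> m1 A = m2 A) ->
  [set sintegral m1 h | h in
    [set h : {nnsfun T >-> R} | (forall x, (h x)%:E <= (f \_ D) x)]] `<=`
  [set sintegral m2 h | h in
    [set h : {nnsfun T >-> R} | (forall x, (h x)%:E <= (f \_ D) x)]].
Proof.
move=> m12 _ [h hfD <-] /=; exists h => //; apply: eq_fsbigr => r _.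
have [hrD|hrD] := pselect (h @^-1` [set r] `<=` D); first by rewrite m12.
suff : r = 0%R by move=> ->; rewrite !mul0e.
apply: contra_notP hrD => /eqP r0 t/= htr.
have := hfD t.
rewrite /patch/=; case: ifPn; first by rewrite inE.
move=> tD.
move: r0; rewrite -htr => ht0.
by rewrite le_eqVlt eqe (negbTE ht0)/= lte_fin// ltNge// fun_ge0.
Qed.

Lemma eq_measure_integral' (m2 m1 : set T -> \bar R) (f : T -> \bar R) :
    (forall A, measurable A -> A `<=` D -> m1 A = m2 A) ->
  \int[m1]_(x in D) f x = \int[m2]_(x in D) f x.
Proof.
move=> m12; rewrite /integral funepos_restrict funeneg_restrict.
by congr (ereal_sup _ - ereal_sup _); rewrite eqEsubset; split;
  apply: eq_measure_integral0 => A /m12 // /[apply].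
Qed.
End eqmi.
Lemma tau_pre (R : realType) (m : nat) (x0 : m.-tuple R) (B : set (m.-tuple R)) :
  measurable B -> measurable (tau x0 @^-1` B).
Proof. by move=> mB; rewrite -[X in measurable X]setTI; exact: tau_meas. Qed.

Lemma EFin_indic_meas d (T : measurableType d) (R : realType) (S : set T) :
  measurable S -> measurable_fun [set: T] (fun y => (\1_S y : R)%:E).
Proof. by move=> mS; apply/measurable_EFinP; exact: measurable_indic. Qed.

Section Conv.
Context (R : realType) (m k : nat) (mu : {measure set (m.-tuple R) -> \bar R})
  (a : 'I_k.+1 -> R) (x : 'I_k.+1 -> m.-tuple R) (ha : forall i, (0 < a i)%R).
Local Notation T := (m.-tuple R).
Local Open Scope ereal_scope.

Let lam := convolution mu (discrete_measure a x).

Lemma lamE (B : set T) : measurable B ->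
  lam B = \sum_(i < k.+1) (a i)%:E * mu (tau (x i) @^-1` B).
Proof.
move=> mB.
rewrite /lam /convolution /pushforward /product_measure1.
transitivity (\int[mu]_y (\sum_(i < k.+1) (a i)%:E * (\1_(tau (x i) @^-1` B) y)%:E)).
  apply: eq_integral => y _ /=.
  rewrite /discrete_measure; apply: eq_bigr => i _; congr (_ * _).
  rewrite /dirac !indicE; congr ((_ : bool)%:R)%:E.
  apply/idP/idP; rewrite !inE /xsection /preimage /= => H.
    by move: H; rewrite inE.
  by rewrite inE.
rewrite ge0_integral_sum//; last 2 first.
- move=> i; apply: emeasurable_funM; first exact: measurable_cst.
  by apply: EFin_indic_meas; exact: tau_pre.
- move=> i y _; rewrite mule_ge0// lee_fin ?ltW//.
apply: eq_bigr => i _.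
rewrite ge0_integralZl_EFin//.
all: try (by move=> y _; rewrite lee_fin).
all: try (by apply: EFin_indic_meas; exact: tau_pre).
all: try exact: ltW.
by rewrite integral_indic ?setIT//; exact: tau_pre.
Qed.

Let PF (x0 : T) : {measure set T -> \bar R} :=
  measure_function_pushforward__canonical__measure_function_Measure mu (tau_meas x0).

Let mm (n : nat) : {measure set T -> \bar R} :=
  mscale (NngNum (ltW (ha (inord n)))) (PF (x (inord n))).

Lemma lam_msum (B : set T) : measurable B -> lam B = msum mm k.+1 B.
Proof.
move=> mB; rewrite lamE// /msum; apply: eq_bigr => i _.
by rewrite /mm /mscale /= inord_val.
Qed.

Lemma int_lam (h : T -> \bar R) : measurable_fun [set: T] h ->
  (forall y, 0 <= h y) ->
  \int[lam]_y h y = \sum_(i < k.+1) (a i)%:E * \int[mu]_y h (tau (x i) y).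
Proof.
move=> mh h0.
rewrite (eq_measure_integral' (m2:=msum mm k.+1)); last by move=> A mA _; exact: lam_msum.
rewrite ge0_integral_measure_sum//.
apply: eq_bigr => i _.
rewrite ge0_integral_mscale//= inord_val.
congr (_ * _).
rewrite ge0_integral_pushforward//.
exact: tau_meas.
Qed.

Lemma int_lam_signed (g : T -> \bar R) : measurable_fun [set: T] g ->
  \int[lam]_y g y =
  (\sum_(i < k.+1) (a i)%:E * \int[mu]_y (g \o tau (x i))^\+ y) -
  (\sum_(i < k.+1) (a i)%:E * \int[mu]_y (g \o tau (x i))^\- y).
Proof.
have E (h : T -> \bar R) : \int[lam]_y h y = \int[msum mm k.+1]_y h y.
  by apply: eq_measure_integral' => A mA _; exact: lam_msum.
move=> mg; rewrite E integralE -!E.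
rewrite (@int_lam g^\+); last 2 first.
- exact: measurable_funepos.
- by move=> y; exact: funepos_ge0.
rewrite (@int_lam g^\-); last 2 first.
- exact: measurable_funeneg.
- by move=> y; exact: funeneg_ge0.
congr (_ - _); apply: eq_bigr => i _; congr (_ * _);
  by apply: eq_integral => y _; rewrite ?funeposE ?funenegE.
Qed.
End Conv.
Section Wsum.
Context (R : realType) (k : nat) (a : 'I_k.+1 -> R) (ha : forall i, (0 < a i)%R)
  (hsum : (\sum_(i < k.+1) a i = 1)%R).
Local Open Scope ereal_scope.
Variables (P N : 'I_k.+1 -> \bar R) (P0 : forall i, 0 <= P i) (N0 : forall i, 0 <= N i).

Lemma wsum_inf : (exists j, N j = +oo) ->
  (\sum_(i < k.+1) (a i)%:E * P i) - (\sum_(i < k.+1) (a i)%:E * N i) = -oo.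
Proof.
move=> [j Nj].
rewrite [X in _ - X](bigD1 j)//=Nj muleC gt0_mulye ?lte_fin// addye ?addeNy//.
rewrite -ltNye (lt_le_trans ltNy0)//.
by apply: sume_ge0 => i _; rewrite mule_ge0// lee_fin ltW.
Qed.

Lemma wsum_fin : (forall i, N i \is a fin_num) ->
  (\sum_(i < k.+1) (a i)%:E * P i) - (\sum_(i < k.+1) (a i)%:E * N i) =
  \sum_(i < k.+1) (a i)%:E * (P i - N i).
Proof.
move=> Nf.
rewrite -fin_num_sumeN; last by move=> i _; rewrite fin_numM.
rewrite -big_split /=; apply: eq_bigr => i _.
rewrite muleBr// fin_num_adde_defl// fin_numN//.
Qed.

Lemma wsum_const (L : \bar R) : \sum_(i < k.+1) (a i)%:E * L = L.
Proof.
rewrite -ge0_sume_distrl; last by move=> i _; rewrite lee_fin ltW.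
by rewrite sumEFin hsum mul1e.
Qed.

Lemma wsum_ge (L : \bar R) : (forall i, L <= P i - N i) ->
  L <= (\sum_(i < k.+1) (a i)%:E * P i) - (\sum_(i < k.+1) (a i)%:E * N i).
Proof.
move=> HL.
have [[j Nj]|nN] := pselect (exists j, N j = +oo).
  have := HL j; rewrite Nj addeNy leeNy_eq => /eqP ->; exact: leNye.
have Nf i : N i \is a fin_num.
  rewrite ge0_fin_numE// ltey; apply/eqP => Ni; apply: nN; by exists i.
rewrite wsum_fin// -{1}(wsum_const L); apply: lee_sum => i _.
by apply: lee_wpmul2l; [rewrite lee_fin ltW|exact: HL].
Qed.

Lemma wsum_le (U : \bar R) : (forall i, P i - N i <= U) ->
  (\sum_(i < k.+1) (a i)%:E * P i) - (\sum_(i < k.+1) (a i)%:E * N i) <= U.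
Proof.
move=> HU.
have [ex|nN] := pselect (exists j, N j = +oo).
  by rewrite wsum_inf// leNye.
have Nf i : N i \is a fin_num.
  rewrite ge0_fin_numE// ltey; apply/eqP => Ni; apply: nN; by exists i.
rewrite wsum_fin// -[leRHS](wsum_const U); apply: lee_sum => i _.
by apply: lee_wpmul2l; [rewrite lee_fin ltW|exact: HU].
Qed.
End Wsum.

Lemma le_integral_meas d (T : measurableType d) (R : realType)
  (mu : {measure set T -> \bar R}) (f g : T -> \bar R) :
  measurable_fun [set: T] f -> measurable_fun [set: T] g ->
  (forall y, (f y <= g y)%E) -> (\int[mu]_y f y <= \int[mu]_y g y)%E.
Proof.
move=> mf mg fg; rewrite integralE [leRHS]integralE; apply: leeB.
- apply: (ge0_le_integral mu measurableT).
  + by move=> y _; exact: funepos_ge0.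
  + exact: measurable_funepos.
  + exact: measurable_funepos.
  + by move=> y _; apply: (@funepos_le _ _ setT) => //; rewrite inE.
- apply: (ge0_le_integral mu measurableT).
  + by move=> y _; exact: funeneg_ge0.
  + exact: measurable_funeneg.
  + exact: measurable_funeneg.
  + by move=> y _; apply: (@funeneg_le _ _ setT) => //; rewrite inE.
Qed.
Section Shift.
Context (R : realType) (m : nat).
Local Notation T := (m.-tuple R).

Definition tsub (a b : T) : T := [tuple tnth a j - tnth b j | j < m].

Lemma edist_shift (y a x0 : T) : Defs.edist (vadd y x0) a = Defs.edist y (tsub a x0).
Proof.
rewrite /Defs.edist; congr Num.sqrt; apply: eq_bigr => j _.
rewrite /vadd /tsub !tnth_mktuple; congr (_ ^+ 2).
by rewrite opprB addrA.
Qed.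

Lemma edist_vadd (y a z : T) : Defs.edist (vadd y z) (vadd a z) = Defs.edist y a.
Proof.
rewrite /Defs.edist; congr Num.sqrt; apply: eq_bigr => j _.
rewrite /vadd !tnth_mktuple; congr (_ ^+ 2).
by rewrite opprD addrACA subrr addr0.
Qed.

Lemma dist_set_shift (y x0 : T) A :
  dist_set (vadd y x0) A = dist_set y (map (tsub ^~ x0) A).
Proof.
by rewrite /dist_set big_map; apply: eq_bigr => a _; rewrite edist_shift.
Qed.

Lemma dist_set_le_mem (z s : T) S : s \in S -> (dist_set z S <= (Defs.edist z s)%:E)%E.
Proof.
elim: S => [//|b S ih]; rewrite in_cons => /orP[/eqP ->|sS].
  by rewrite dist_set_cons ge_min lexx.
by rewrite dist_set_cons ge_min ih ?orbT.
Qed.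

Lemma dist_set_ge (z : T) S (c : \bar R) :
  (forall s, s \in S -> (c <= (Defs.edist z s)%:E)%E) -> (c <= dist_set z S)%E.
Proof.
elim: S => [|b S ih] H; first by rewrite /dist_set big_nil leey.
rewrite dist_set_cons le_min H ?mem_head//= ih// => s sS.
by apply: H; rewrite in_cons sS orbT.
Qed.
End Shift.
Section Main.
Context (R : realType) (m k : nat) (mu : {measure set (m.-tuple R) -> \bar R})
  (a : 'I_k.+1 -> R) (x : 'I_k.+1 -> m.-tuple R) (ha : forall i, (0 < a i)%R)
  (hsum : (\sum_(i < k.+1) a i = 1)%R).
Local Notation T := (m.-tuple R).
Local Open Scope ereal_scope.

Let lam := convolution mu (discrete_measure a x).

Lemma logen_ge n : log_en mu n <= log_en lam n.
Proof.
apply: le_ereal_inf_tmp => _ [A hA <-].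
rewrite int_lam_signed; last exact: fA_meas.
apply: (wsum_ge ha hsum).
all: try (by move=> i; apply: integral_ge0 => y _; exact: funepos_ge0).
all: try (by move=> i; apply: integral_ge0 => y _; exact: funeneg_ge0).
move=> i; rewrite -integralE.
apply: ereal_inf_lbound; exists (map (fun b => tsub b (x i)) A).
  by rewrite /= size_map.
apply: eq_integral => y _ /=.
  by rewrite /fA /tau dist_set_shift.
exact: ha.
Qed.

Lemma logen_le n : log_en lam (k.+1 * n) <= log_en mu n.
Proof.
apply: le_ereal_inf_tmp => _ [A hA <-].
pose A' := [seq vadd b (x i) | i <- enum 'I_k.+1, b <- A].
apply: (le_trans (ereal_inf_lbound _)).
  exists A'; last reflexivity.
  by rewrite /= size_allpairs size_enum_ord leq_mul.
rewrite int_lam_signed; last exact: fA_meas.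
apply: (wsum_le ha hsum).
all: try (by move=> i; apply: integral_ge0 => y _; exact: funepos_ge0).
all: try (by move=> i; apply: integral_ge0 => y _; exact: funeneg_ge0).
move=> i; rewrite -integralE.
  apply: le_integral_meas.
- apply: measurableT_comp; [exact: fA_meas|exact: tau_meas].
- exact: fA_meas.
move=> y /=; rewrite /fA /tau; apply: elog_le; first exact: dist_set_ge0.
apply: dist_set_ge => b bA.
rewrite -(edist_vadd y b (x i)); apply: dist_set_le_mem.
  by apply/allpairsP; exists (i, b); rewrite mem_enum.
all: exact: ha.
Qed.
End Main.
Section Ratio.
Context (R : realType).
Local Open Scope ereal_scope.

Lemma ratio_ge0 (c : R) (b : \bar R) : (0 <= c)%R -> 0 <= b -> 0 <= Defs.ratio c b.
Proof.
move=> c0; case: b => [r| |] //= r0; case: ifPn => // rn0.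
by rewrite lee_fin divr_ge0// -lee_fin.
Qed.

Lemma ratio_anti (c : R) (b1 b2 : \bar R) : (0 <= c)%R -> b1 <= b2 ->
  (0 <= b1 \/ (-oo < b1 /\ b2 < 0)) \/ b1 = b2 -> Defs.ratio c b2 <= Defs.ratio c b1.
Proof.
move=> c0 b12 [[b10|[b1N b20]]|->//].
- case: b2 b12 => [r2| |] b12; last 2 first.
  + by rewrite /= ratio_ge0.
  + by move: (le_trans b10 b12).
  case: b1 b10 b12 => [r1| |] //= b10 b12.
  have [r10|r1n0] := eqVneq r1 0%R; first by rewrite leey.
  rewrite lee_fin in b10; rewrite lee_fin in b12.
  have r1p : (0 < r1)%R by rewrite lt0r r1n0.
  have r2p : (0 < r2)%R := lt_le_trans r1p b12.
  rewrite (gt_eqF r2p) lee_fin ler_wpM2l// lef_pV2// posrE.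
- case: b1 b1N b12 => [r1| |] //= _; last first.
    by rewrite leye_eq => /eqP b2y; move: b20; rewrite b2y.
  case: b2 b20 => [r2| |] //= b20 b12.
  rewrite lte_fin in b20; rewrite lee_fin in b12.
  have r1n : (r1 < 0)%R := le_lt_trans b12 b20.
  rewrite (lt_eqF r1n) (lt_eqF b20) lee_fin ler_wpM2l// lef_nV2// negrE.
Qed.

Lemma ratio_scale (c s : R) (b : \bar R) : (0 < s)%R ->
  Defs.ratio (c * s) b = Defs.ratio c b * s%:E.
Proof.
move=> s0; case: b => [r| |] /=; last 2 first.
- by rewrite mul0e.
- by rewrite mul0e.
case: ifPn => _; first by rewrite gt0_mulye// lte_fin.
by rewrite -EFinM mulrAC.
Qed.
End Ratio.
Section RLim.
Context (R : realType).

Lemma ln_cvgy : (fun n : nat => ln (n%:R : R)) @ \oo --> +oo.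
Proof.
apply/cvgryPge => A; near=> n.
have h : (expR A <= n%:R :> R)%R by near: n; exact: nbhs_infty_ger.
have np : (0 < n%:R :> R)%R := lt_le_trans (expR_gt0 A) h.
by rewrite -(ler_ln (expR_gt0 A) np) expRK in h.
Unshelve. all: end_near. Qed.

Lemma r_cvg (K : nat) : (0 < K)%N ->
  (fun n : nat => ln ((K * n)%:R : R) / ln n%:R) @ \oo --> (1 : R).
Proof.
move=> K1.
have iv : (fun n : nat => (ln (n%:R : R))^-1) @ \oo --> (0 : R).
  apply/gtr0_cvgV0; last exact: ln_cvgy.
  near=> n; apply: ln_gt0; rewrite ltr1n.
  by near: n; exact: nbhs_infty_gt.
apply: (@cvg_trans _ ((fun n : nat => 1 + ln (K%:R : R) * (ln (n%:R : R))^-1) @ \oo)).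
  apply: near_eq_cvg; near=> n.
  have n1 : (1 < n)%N by near: n; exact: nbhs_infty_gt.
  have lnp : (0 < ln (n%:R : R))%R by apply: ln_gt0; rewrite ltr1n.
  rewrite natrM lnM ?posrE ?ltr0n ?(ltn_trans _ n1)//.
  by rewrite mulrDl divff ?gt_eqF// addrC.
suff : (fun n : nat => 1 + ln (K%:R : R) * (ln (n%:R : R))^-1) @ \oo -->
    (1 + ln (K%:R : R) * 0 : R) by rewrite mulr0 addr0.
apply: cvgD; first exact: cvg_cst.
exact: cvgMl_tmp.
Unshelve. all: end_near. Qed.
End RLim.
Section Lim.
Context (R : realType) (K : nat) (K1 : (0 < K)%N) (Lm Ll : nat -> \bar R).
Hypotheses (Mm : forall n n', (n <= n')%N -> (Lm n' <= Lm n)%E)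
  (Ml : forall n n', (n <= n')%N -> (Ll n' <= Ll n)%E)
  (G : forall n, (Lm n <= Ll n)%E) (U : forall n, (Ll (K * n) <= Lm n)%E).
Local Open Scope ereal_scope.

Let u n := Defs.ratio (ln (n%:R : R)) (- Lm n).
Let v n := Defs.ratio (ln (n%:R : R)) (- Ll n).
Let r n := (ln ((K * n)%:R : R) / ln (n%:R : R))%R.

Let step2 n : (2 <= n)%N ->
  ((0 <= - Lm n) \/ (-oo < - Lm n /\ - Ll (K * n) < 0)) \/ - Lm n = - Ll (K * n) ->
  v (K * n) <= u n * (r n)%:E.
Proof.
move=> n2 cond.
have lnp : (0 < ln (n%:R : R))%R by apply: ln_gt0; rewrite ltr1n.
have Kn : (n <= K * n)%N by rewrite leq_pmull.
have lnKp : (0 < ln ((K * n)%:R : R))%R.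
  by apply: ln_gt0; rewrite ltr1n (leq_trans n2).
have rp : (0 < r n)%R by rewrite /r divr_gt0.
rewrite /u -ratio_scale// /r mulrC divfK ?gt_eqF//.
apply: ratio_anti => //; first exact: ltW.
by rewrite leeN2.
Qed.

Let step1 n : (1 <= n)%N -> ((0 <= - Ll n) \/ (-oo < - Ll n /\ - Lm n < 0)) \/ - Ll n = - Lm n ->
  u n <= v n.
Proof.
move=> n1 cond; apply: ratio_anti => //.
  by apply: ln_ge0; rewrite ler1n.
by rewrite leeN2.
Qed.

Lemma claims : exists N, forall n, (N <= n)%N ->
  u n <= v n /\ v (K * n) <= u n * (r n)%:E.
Proof.
have hN (z : \bar R) : z < +oo -> -oo < - z.
  by move=> h; rewrite ltNye eqe_oppLR /= -ltey.
have [[n0 Ln0]|nA] := pselect (exists n0, Lm n0 <= 0).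
  exists (maxn 2 (K * n0)) => n; rewrite geq_max => /andP[n2 Kn0n].
  have n0n : (n0 <= n)%N by rewrite (leq_trans _ Kn0n)// leq_pmull.
  split.
    apply: step1; first exact: leq_trans n2; left; left; rewrite oppe_ge0.
    by rewrite (le_trans (Ml Kn0n)) // (le_trans (U n0)).
  apply: step2 => //; left; left; rewrite oppe_ge0.
  by rewrite (le_trans (Mm n0n)).
have Lp n : 0 < Lm n by rewrite ltNge; apply/negP => h; apply: nA; exists n.
have [[n0 Ln0]|nB] := pselect (exists n0, Lm n0 < +oo).
  exists (maxn 2 (K * n0)) => n; rewrite geq_max => /andP[n2 Kn0n].
  have n0n : (n0 <= n)%N by rewrite (leq_trans _ Kn0n)// leq_pmull.
  split.
    apply: step1; first exact: leq_trans n2; left; right; split; last by rewrite oppe_lt0.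
    apply: hN; rewrite (le_lt_trans (Ml Kn0n))// (le_lt_trans (U n0))//.
  apply: step2 => //; left; right; split.
    by apply: hN; rewrite (le_lt_trans (Mm n0n)).
  by rewrite oppe_lt0 (lt_le_trans (Lp (K * n)%N) (G _)).
have Ly n : Lm n = +oo.
  by apply/eqP; rewrite eq_le leey /= leNgt; apply/negP => h; apply: nB; exists n.
have Lly n : Ll n = +oo by apply/eqP; rewrite eq_le leey /= -(Ly n).
exists 2%N => n n2; split.
  by apply: step1; first exact: leq_trans n2; right; rewrite Ly Lly.
by apply: step2 => //; right; rewrite Ly Lly.
Qed.

Lemma lim_eq : cvgn u -> cvgn v -> limn v = limn u.
Proof.
move=> hu hv; have [N HN] := claims.
apply/eqP; rewrite eq_le; apply/andP; split; last first.
  apply: lee_lim => //; near=> n; apply: (proj1 (HN n _)).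
  by near: n; exact: nbhs_infty_ge.
have hvK : (v \o muln K) @ \oo --> limn v := cvg_comp _ _ (@cvg_mulnl K K1) hv.
have hr : (fun n => (r n)%:E) @ \oo --> 1%:E.
  apply: cvg_EFin; first by near=> n.
  exact: r_cvg.
have hur : (fun n => u n * (r n)%:E) @ \oo --> limn u * 1%:E.
  apply: cvgeM => //.
  case: (boolP (limn u \is a fin_num)) => fu.
    exact: mule_def_fin.
  exact: mule_def_infty_neq0.
rewrite -(cvg_lim _ hvK)// -[leRHS]mule1 -(cvg_lim _ hur)//.
apply: lee_lim.
- exact: cvgP hvK.
- exact: cvgP hur.
near=> n; apply: (proj2 (HN n _)).
by near: n; exact: nbhs_infty_ge.
Unshelve. all: end_near. Qed.
End Lim.
Lemma log_en_mono (R : realType) (m : nat) (lam : set (m.-tuple R) -> \bar R) n n' :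
  (n <= n')%N -> (log_en lam n' <= log_en lam n)%E.
Proof.
move=> nn'; apply: ereal_inf_le_tmp => _ [A hA <-]; exists A => //.
exact: leq_trans hA nn'.
Qed.

Theorem lemma3p10 (R : realType) (m : nat)
  (mu : probability (m.-tuple R) R)
  (k : nat) (x : 'I_k -> m.-tuple R) (a : 'I_k -> R)
  (ha : forall i, 0 < a i) (hsum : \sum_(i < k) a i = 1)
  (hD0mu : cvgn (D0_seq mu))
  (hD0conv : cvgn (D0_seq (convolution mu (discrete_measure a x)))) :
  limn (D0_seq (convolution mu (discrete_measure a x))) = limn (D0_seq mu).
Proof.
case: k x a ha hsum hD0conv => [|k] x a ha hsum hD0conv.
  by move: hsum; rewrite big_ord0 => /eqP; rewrite eq_sym oner_eq0.
apply: (@lim_eq R k.+1 erefl (log_en mu)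
  (log_en (convolution mu (discrete_measure a x)))).
- by move=> n n' nn'; exact: log_en_mono.
- by move=> n n' nn'; exact: log_en_mono.
- by move=> n; exact: logen_ge.
- by move=> n; exact: logen_le.
- exact: hD0mu.
- exact: hD0conv.
Qed.
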